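(* Let $\mathcal D$ be universal, $\mathrm M=(M,d)\in\mathfrak U_{\mathcal D}$, and let $r\in\mathcal D$, $r>0$, be such that no element of $\mathcal D$ lies in the interval $(r,2r]$. Then the relation $x\sim_r y\iff d(x,y)\le r$ is an equivalence relation on $M$, and for any two distinct $\sim_r$-classes $A\ne B$, any $a\in A$ and any $n\in d(A,B)$: (1) $n>2r$; (2) there exists $b\in B$ with $d(a,b)=n$; (3) $d_{\max}(A,B)-d_{\min}(A,B)\le r$.
   Context: $\mathcal D$ is a finite subset of $\mathbb R_{\ge0}$ containing $0$. $\mathfrak U_{\mathcal D}$ is the class of countable homogeneous metric spaces (every isometry between finite subspaces extends to an isometry of the space onto itself) with distance set exactly $\mathcal D$ into which every finite metric space with distances in $\mathcal D$ embeds isometrically; $\mathcal D$ is universal if this class is nonempty. For subsets $A,B\subseteq M$: $d(A,B)=\{d(a,b):a\in A,b\in B\}$, $d_{\min}(A,B)=\min d(A,B)$, $d_{\max}(A,B)=\max d(A,B)$. *)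

(* Defs.v *)
From Stdlib Require Import Reals List Relation_Definitions.
Open Scope R_scope.

Definition is_metric {M : Type} (d : M -> M -> R) : Prop :=
  (forall x y, 0 <= d x y) /\
  (forall x y, d x y = 0 <-> x = y) /\
  (forall x y, d x y = d y x) /\
  (forall x y z, d x z <= d x y + d y z).

Definition countable (M : Type) : Prop :=
  exists f : M -> nat, forall x y, f x = f y -> x = y.

(* Homogeneity: every isometry between finite subspaces (p restricted to the
   finite set A, onto its image) extends to an isometry of M onto itself. *)
Definition homogeneous {M : Type} (d : M -> M -> R) : Prop :=
  forall (A : list M) (p : M -> M),
    (forall x y, In x A -> In y A -> d (p x) (p y) = d x y) ->
    exists g : M -> M,
      (forall x y, g x = g y -> x = y) /\
      (forall y, exists x, g x = y) /\
      (forall x y, d (g x) (g y) = d x y) /\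
      (forall x, In x A -> g x = p x).

Definition dist_set_is {M : Type} (d : M -> M -> R) (D : list R) : Prop :=
  forall t, In t D <-> exists x y, d x y = t.

Definition finite_metric_in (D : list R) (n : nat) (f : nat -> nat -> R) : Prop :=
  (forall i, (i < n)%nat -> f i i = 0) /\
  (forall i j, (i < n)%nat -> (j < n)%nat -> i <> j -> 0 < f i j) /\
  (forall i j, (i < n)%nat -> (j < n)%nat -> f i j = f j i) /\
  (forall i j k, (i < n)%nat -> (j < n)%nat -> (k < n)%nat -> f i k <= f i j + f j k) /\
  (forall i j, (i < n)%nat -> (j < n)%nat -> In (f i j) D).

Definition D_universal_space {M : Type} (d : M -> M -> R) (D : list R) : Prop :=
  forall (n : nat) (f : nat -> nat -> R), finite_metric_in D n f ->
    exists e : nat -> M,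
      (forall i j, (i < n)%nat -> (j < n)%nat -> d (e i) (e j) = f i j).

Definition in_UD (D : list R) (M : Type) (d : M -> M -> R) : Prop :=
  is_metric d /\ countable M /\ homogeneous d /\ dist_set_is d D /\
  D_universal_space d D.

(* D (a finite subset of R_{>=0} containing 0, given as a list) is universal. *)
Definition universal (D : list R) : Prop :=
  exists (M : Type) (d : M -> M -> R), in_UD D M d.

Definition is_max_of (S : R -> Prop) (m : R) : Prop := S m /\ forall x, S x -> x <= m.
Definition is_min_of (S : R -> Prop) (m : R) : Prop := S m /\ forall x, S x -> m <= x.

(* Main.v *)
Require Import Defs.
From Stdlib Require Import Reals List Relation_Definitions Lra Lia Classical.
Open Scope R_scope.

Lemma max_exists (L : list R) : forall S : R -> Prop,
  (forall t, S t -> In t L) -> (exists t, S t) -> exists m, is_max_of S m.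
Proof.
  induction L as [|h L IH]; intros S HS [t0 Ht0].
  - destruct (HS _ Ht0).
  - destruct (classic (exists t, S t /\ In t L)) as [Hex|Hno].
    + destruct (IH (fun t => S t /\ In t L)) as [m' [[Hm1 Hm2] Hm3]].
      { intros t [_ H]; exact H. } { exact Hex. }
      destruct (classic (S h)) as [Sh|nSh].
      * exists (Rmax h m'). split.
        { unfold Rmax; destruct (Rle_dec h m'); auto. }
        intros x Sx. destruct (HS _ Sx) as [<-|Hx].
        -- apply Rmax_l.
        -- eapply Rle_trans; [apply (Hm3 x (conj Sx Hx))|apply Rmax_r].
      * exists m'. split; auto. intros x Sx. destruct (HS _ Sx) as [<-|Hx].
        -- contradiction. -- apply (Hm3 x (conj Sx Hx)).
    + exists h. assert (Hall : forall t, S t -> t = h).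
      { intros t St. destruct (HS _ St) as [<-|Ht]; auto.
        exfalso; apply Hno; eauto. }
      split.
      * rewrite <- (Hall _ Ht0); exact Ht0.
      * intros x Sx; rewrite (Hall _ Sx); lra.
Qed.

Lemma min_exists (L : list R) : forall S : R -> Prop,
  (forall t, S t -> In t L) -> (exists t, S t) -> exists m, is_min_of S m.
Proof.
  induction L as [|h L IH]; intros S HS [t0 Ht0].
  - destruct (HS _ Ht0).
  - destruct (classic (exists t, S t /\ In t L)) as [Hex|Hno].
    + destruct (IH (fun t => S t /\ In t L)) as [m' [[Hm1 Hm2] Hm3]].
      { intros t [_ H]; exact H. } { exact Hex. }
      destruct (classic (S h)) as [Sh|nSh].
      * exists (Rmin h m'). split.
        { unfold Rmin; destruct (Rle_dec h m'); auto. }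
        intros x Sx. destruct (HS _ Sx) as [<-|Hx].
        -- apply Rmin_l.
        -- eapply Rle_trans; [apply Rmin_r|apply (Hm3 x (conj Sx Hx))].
      * exists m'. split; auto. intros x Sx. destruct (HS _ Sx) as [<-|Hx].
        -- contradiction. -- apply (Hm3 x (conj Sx Hx)).
    + exists h. assert (Hall : forall t, S t -> t = h).
      { intros t St. destruct (HS _ St) as [<-|Ht]; auto.
        exfalso; apply Hno; eauto. }
      split.
      * rewrite <- (Hall _ Ht0); exact Ht0.
      * intros x Sx; rewrite (Hall _ Sx); lra.
Qed.

Definition f4 (s n m : R) (i j : nat) : R :=
  match i, j with
  | O, S O | S O, O | S (S O), S (S (S O)) | S (S (S O)), S (S O) => s
  | S O, S (S O) | S (S O), S O | O, S (S (S O)) | S (S (S O)), O => n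
  | O, S (S O) | S (S O), O | S O, S (S (S O)) | S (S (S O)), S O => m
  | _, _ => 0%R
  end.

Lemma f4_metric (D : list R) s n m :
  In 0 D -> In s D -> In n D -> In m D -> 0 < s -> 0 < n -> 0 < m ->
  s <= n + m -> n <= s + m -> m <= s + n ->
  finite_metric_in D 4 (f4 s n m).
Proof.
  intros H0 Hs Hn Hm ps pn pm t1 t2 t3.
  repeat split; intros.
  - destruct i as [|[|[|[|i]]]]; simpl; auto; lia.
  - destruct i as [|[|[|[|i]]]]; destruct j as [|[|[|[|j]]]]; simpl;
      try lia; try lra.
  - destruct i as [|[|[|[|i]]]]; destruct j as [|[|[|[|j]]]]; simpl;
      try lia; try lra.
  - destruct i as [|[|[|[|i]]]]; destruct j as [|[|[|[|j]]]];
      destruct k as [|[|[|[|k]]]]; simpl; try lia; try lra.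
  - destruct i as [|[|[|[|i]]]]; destruct j as [|[|[|[|j]]]]; simpl;
      try lia; auto.
Qed.

Theorem lemma3p2 (D : list R) (HD0 : In 0 D) (HDnn : forall t, In t D -> 0 <= t)
  (HDu : universal D) (M : Type) (d : M -> M -> R) (HM : in_UD D M d)
  (r : R) (HrD : In r D) (Hr : 0 < r)
  (Hgap : forall t, In t D -> ~ (r < t /\ t <= 2 * r)) :
  equivalence M (fun x y => d x y <= r) /\
  forall x y : M, ~ (d x y <= r) ->
    let dAB := fun n => exists a' b', d a' x <= r /\ d b' y <= r /\ d a' b' = n in
    (forall a n, d a x <= r -> dAB n ->
       n > 2 * r /\ exists b, d b y <= r /\ d a b = n) /\
    (exists mx mn, is_max_of dAB mx /\ is_min_of dAB mn /\ mx - mn <= r).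
Proof.
  destruct HM as [[Hnn [Hz [Hsym Htri]]] [_ [Hhom [Hds Huniv]]]].
  assert (HinD : forall u v, In (d u v) D) by (intros u v; apply Hds; eauto).
  assert (Htr : forall u v w, d u v <= r -> d v w <= r -> d u w <= r).
  { intros u v w H1 H2. pose proof (Htri u v w).
    destruct (Rle_lt_dec (d u w) r) as [|Hlt]; auto.
    exfalso; apply (Hgap _ (HinD u w)); split; lra. }
  assert (Hrefl : forall u, d u u = 0) by (intro u; apply Hz; reflexivity).
  split.
  { split.
    - intro u; rewrite Hrefl; lra.
    - intros u v w; apply Htr.
    - intros u v H; rewrite Hsym; exact H. }
  intros x y Hxy dAB.
  assert (Hsep : forall a b, d a x <= r -> d b y <= r -> d a b > 2 * r).
  { intros a b Ha Hb.
    destruct (Rle_lt_dec (d a b) r) as [Hle|Hlt].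
    - exfalso; apply Hxy. apply (Htr x a y).
      + rewrite Hsym; exact Ha.
      + apply (Htr a b y); auto.
    - destruct (Rle_lt_dec (d a b) (2*r)); [|lra].
      exfalso; apply (Hgap _ (HinD a b)); split; lra. }
  assert (P1 : forall a n, d a x <= r -> dAB n ->
       n > 2 * r /\ exists b, d b y <= r /\ d a b = n).
  { intros a n Ha [a' [b' [Ha' [Hb' Hn]]]]. subst n.
    split; [apply Hsep; auto|].
    destruct (Req_EM_T (d a a') 0) as [E|NE].
    { apply Hz in E; subst a'. exists b'; auto. }
    set (s := d a a'). set (n := d a' b'). set (m := d a b').
    assert (ps : 0 < s) by (pose proof (Hnn a a'); unfold s in *; lra).
    assert (sr : s <= r).
    { unfold s; apply (Htr a x a'); auto; rewrite Hsym; auto. }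
    assert (pn : n > 2*r) by (apply Hsep; auto).
    assert (pm : m > 2*r) by (apply Hsep; auto).
    assert (t1 : s <= n + m).
    { pose proof (Htri a b' a'). unfold s, n, m in *. rewrite (Hsym b' a') in *. lra. }
    assert (t2 : n <= s + m).
    { pose proof (Htri a' a b'). unfold s, n, m in *. rewrite (Hsym a' a) in *. lra. }
    assert (t3 : m <= s + n).
    { pose proof (Htri a a' b'). unfold s, n, m in *. lra. }
    destruct (Huniv 4%nat (f4 s n m)) as [e He].
    { apply f4_metric; auto; try lra; apply HinD. }
    assert (E01 : d (e 0%nat) (e 1%nat) = s) by (apply He; lia).
    assert (E02 : d (e 0%nat) (e 2%nat) = m) by (apply He; lia).
    assert (E12 : d (e 1%nat) (e 2%nat) = n) by (apply He; lia).
    assert (E03 : d (e 0%nat) (e 3%nat) = n) by (apply He; lia).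
    assert (E32 : d (e 3%nat) (e 2%nat) = s) by (apply He; lia).
    set (p := fun z => if Req_EM_T (d z (e 0%nat)) 0 then a
                       else if Req_EM_T (d z (e 1%nat)) 0 then a' else b').
    assert (p0 : p (e 0%nat) = a).
    { unfold p; rewrite Hrefl; destruct (Req_EM_T 0 0); [auto|congruence]. }
    assert (p1 : p (e 1%nat) = a').
    { unfold p. rewrite (Hsym (e 1%nat)), E01, Hrefl.
      destruct (Req_EM_T s 0); [lra|]. destruct (Req_EM_T 0 0); [auto|congruence]. }
    assert (p2 : p (e 2%nat) = b').
    { unfold p. rewrite (Hsym (e 2%nat)), E02, (Hsym (e 2%nat)), E12.
      destruct (Req_EM_T m 0); [lra|]. destruct (Req_EM_T n 0); [lra|auto]. }
    destruct (Hhom (e 0%nat :: e 1%nat :: e 2%nat :: nil) p) as [g [_ [_ [Hg Hgp]]]].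
    { intros u v Hu Hv.
      destruct Hu as [<-|[<-|[<-|[]]]]; destruct Hv as [<-|[<-|[<-|[]]]];
        rewrite ?p0, ?p1, ?p2, ?Hrefl;
        repeat first [rewrite E01 | rewrite E02 | rewrite E12
                     | rewrite (Hsym (e 1%nat) (e 0%nat)), E01
                     | rewrite (Hsym (e 2%nat) (e 0%nat)), E02
                     | rewrite (Hsym (e 2%nat) (e 1%nat)), E12];
        unfold s, n, m; auto; apply Hsym. }
    exists (g (e 3%nat)).
    assert (G0 : g (e 0%nat) = a) by (rewrite Hgp; simpl; auto).
    assert (G2 : g (e 2%nat) = b') by (rewrite Hgp; simpl; auto).
    split.
    - apply (Htr _ b'); auto. rewrite <- G2, Hg, E32; lra.
    - rewrite <- G0, Hg, E03. reflexivity. }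
  split; [exact P1|].
  assert (HS : forall t, dAB t -> In t D).
  { intros t [a' [b' [_ [_ <-]]]]; apply HinD. }
  assert (Hne : exists t, dAB t).
  { exists (d x y), x, y. rewrite !Hrefl. split; [lra|split; [lra|reflexivity]]. }
  destruct (max_exists D dAB HS Hne) as [mx Hmx].
  destruct (min_exists D dAB HS Hne) as [mn Hmn].
  exists mx, mn. split; [auto|split; [auto|]].
  destruct Hmx as [[a1 [b1 [Ha1 [Hb1 E1]]]] _].
  destruct Hmn as [Hmn _].
  destruct (P1 a1 mn Ha1 Hmn) as [_ [b [Hb Eb]]].
  pose proof (Htri a1 b b1).
  assert (d b b1 <= r) by (apply (Htr _ y); auto; rewrite Hsym; auto).
  lra.
Qed.
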